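(* Let $\mathcal T=\boxtimes ABCD$ be a tetrahedron and $O\in\operatorname{int}\mathcal T$. (1) $(\mathcal T,O)$ has a stable equilibrium on the face $\triangle ABC$ if and only if the dihedral angles between $\triangle ABC$ and each of $\triangle ABO$, $\triangle AOC$, $\triangle OBC$ (i.e. the dihedral angles of the tetrahedron $\boxtimes ABCO$ along the edges $\overline{AB},\overline{AC},\overline{BC}$) are all acute. (2) $(\mathcal T,O')$ has a stable equilibrium on $\triangle ABC$ for every $O'\in\operatorname{int}\mathcal T$ if and only if none of the dihedral angles between $\triangle ABC$ and each of $\triangle ABD$, $\triangle ADC$, $\triangle DBC$ is obtuse. (3) Let $\mathcal S_A$ be a small sphere centred at $A$ and let $P,Q,\Omega$ be the intersections of $\mathcal S_A$ with the segments $\overline{AB},\overline{AC},\overline{AO}$ respectively; define analogously points on a small sphere $\mathcal S_B$ centred at $B$ (intersections with $\overline{BA},\overline{BC},\overline{BO}$). If the dihedral angle between $\triangle ABC$ and $\triangle ABO$ is obtuse, then the spherical angle $\angle QP\Omega$ on $\mathcal S_A$ is obtuse, and so is the corresponding spherical angle on $\mathcal S_B$ (at the point on $\overline{BA}$, between the arcs towards the points on $\overline{BC}$ and $\overline{BO}$).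
   Context: For a convex polyhedron $\mathcal P$ and $O\in\operatorname{int}\mathcal P$, $(\mathcal P,O)$ is in (stable) equilibrium on a face $F$ if there exists $Q$ in the relative interior of $F$ such that the plane perpendicular to $[O,Q]$ at $Q$ supports $\mathcal P$. *)

(* Defs.v *)
From HB Require Import structures.
From mathcomp Require Import all_boot all_order all_algebra.
From mathcomp Require Import all_classical all_reals all_analysis.
Set Implicit Arguments. Unset Strict Implicit. Unset Printing Implicit Defensive.
Import Order.TTheory GRing.Theory Num.Theory.
Import numFieldNormedType.Exports.
Local Open Scope classical_set_scope.
Local Open Scope ring_scope.

Section Geometry.
Variable R : realType.
Notation vec := 'rV[R]_3.

Definition dotv (u v : vec) : R := \sum_(i < 3) u 0 i * v 0 i.
Definition enorm (u : vec) : R := Num.sqrt (dotv u u).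

Definition vec_angle (u v : vec) : R := acos (dotv u v / (enorm u * enorm v)).

Definition perp (e u : vec) : vec := u - (dotv u e / dotv e e) *: e.

(* dihedral angle along the edge [A,B] between the half-planes (triangles)
   ABX and ABY: angle between the components of X-A and Y-A orthogonal to AB *)
Definition dihedral (A B X Y : vec) : R :=
  vec_angle (perp (B - A) (X - A)) (perp (B - A) (Y - A)).

Definition acute (t : R) : Prop := t < pi / 2.
Definition obtuse (t : R) : Prop := pi / 2 < t.

(* spherical angle at the point P of a sphere centred at A between the great
   circle arcs from P to Q and from P to W: angle between the tangent vectors
   at P of these arcs *)
Definition spherical_angle (A P Q W : vec) : R :=
  vec_angle (perp (P - A) (Q - A)) (perp (P - A) (W - A)).

Definition on_seg (X Y P : vec) : Prop :=
  exists t : R, 0 <= t <= 1 /\ P = (1 - t) *: X + t *: Y.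

Definition tetra (A B C D : vec) : set vec :=
  [set X | exists a b c d : R, [/\ 0 <= a, 0 <= b, 0 <= c & 0 <= d] /\
      a + b + c + d = 1 /\ X = a *: A + b *: B + c *: C + d *: D].

Definition triangle (A B C : vec) : set vec :=
  [set X | exists a b c : R, [/\ 0 <= a, 0 <= b & 0 <= c] /\
      a + b + c = 1 /\ X = a *: A + b *: B + c *: C].
Definition aff3 (A B C : vec) : set vec :=
  [set X | exists a b c : R, a + b + c = 1 /\ X = a *: A + b *: B + c *: C].

Definition rel_interior (L S : set vec) : set vec :=
  [set X | S X /\ exists e : R, 0 < e /\
     forall Y, L Y -> `|Y - X| < e -> S Y].

Definition mx3 (u v w : vec) : 'M[R]_3 :=
  \matrix_(i < 3, j < 3) (if val i == 0%N then u 0 j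
                          else if val i == 1%N then v 0 j else w 0 j).
Definition noncoplanar (A B C D : vec) : Prop :=
  \det (mx3 (B - A) (C - A) (D - A)) != 0.

(* the plane through Q perpendicular to [O,Q] supports the body K *)
Definition supports_perp (K : set vec) (O Q : vec) : Prop :=
  Q != O /\ K Q /\
  ((forall X, K X -> dotv (X - Q) (Q - O) <= 0) \/
   (forall X, K X -> 0 <= dotv (X - Q) (Q - O))).

Definition equilibrium_on (K F L : set vec) (O : vec) : Prop :=
  exists Q, rel_interior L F Q /\ supports_perp K O Q.

End Geometry.

(* Main.v *)
Require Import Defs.
From HB Require Import structures.
From mathcomp Require Import all_boot all_order all_algebra.
From mathcomp Require Import all_classical all_reals all_analysis.
From mathcomp Require Import ring lra.
Import Order.TTheory GRing.Theory Num.Theory.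
Import numFieldNormedType.Exports.
Local Open Scope classical_set_scope.
Local Open Scope ring_scope.

Set Implicit Arguments. Unset Strict Implicit.
Section S.
Variable R : realType.
Notation vec := 'rV[R]_3.
Implicit Types u v w x y z A B C D X e : vec.

Lemma dotvE (u v : vec) : dotv u v = u 0 0 * v 0 0 + u 0 1 * v 0 1 + u 0 2%:R * v 0 2%:R.
Proof. rewrite /dotv !big_ord_recr big_ord0 /= add0r. by congr (_ + _ + _); congr (_ * _); congr (_ _ _); apply/val_inj. Qed.

Lemma vecP (x y : vec) : x 0 0 = y 0 0 -> x 0 1 = y 0 1 -> x 0 2%:R = y 0 2%:R -> x = y.
Proof.
move=> h0 h1 h2; apply/rowP => -[[|[|[|k]]] Hk] //.
- by rewrite (_ : Ordinal Hk = 0) //; apply: val_inj.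
- by rewrite (_ : Ordinal Hk = 1) //; apply: val_inj.
- by rewrite (_ : Ordinal Hk = 2%:R) //; apply: val_inj.
Qed.

Definition crossv (u v : vec) : vec := \row_(j < 3)
  (if val j == 0%N then u 0 1 * v 0 2%:R - u 0 2%:R * v 0 1
   else if val j == 1%N then u 0 2%:R * v 0 0 - u 0 0 * v 0 2%:R
   else u 0 0 * v 0 1 - u 0 1 * v 0 0).

Definition cu (u : vec) (k : nat) := u 0 (inord k).
Lemma cE (u : vec) (i : 'I_3) : u 0 i = cu u (val i).
Proof. by rewrite /cu inord_val. Qed.

Ltac cnorm := repeat match goal with |- context [cu ?u ?k] =>
  let k' := eval compute in k in progress change (cu u k) with (cu u k') end.

Ltac coord := rewrite ?dotvE ?mxE /= ?cE; cnorm.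
Ltac vcoord := apply: vecP; coord.

Lemma detE (u v w : vec) : \det (mx3 u v w) = dotv u (crossv v w).
Proof.
rewrite (expand_det_row _ 0) !big_ord_recr big_ord0 /= add0r.
rewrite /cofactor !(expand_det_row _ 0) !big_ord_recr big_ord0 /= !add0r.
rewrite /cofactor !det_mx11 !big_ord0 dotvE !mxE /= !(cE u) !(cE v) !(cE w) /=.
cnorm; ring.
Qed.

Lemma dotvC u v : dotv u v = dotv v u.
Proof. coord; ring. Qed.
Lemma dotvDl u v w : dotv (u + v) w = dotv u w + dotv v w.
Proof. coord; ring. Qed.
Lemma dotvDr u v w : dotv w (u + v) = dotv w u + dotv w v.
Proof. coord; ring. Qed.
Lemma dotvBl u v w : dotv (u - v) w = dotv u w - dotv v w.
Proof. coord; ring. Qed.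
Lemma dotvBr u v w : dotv w (u - v) = dotv w u - dotv w v.
Proof. coord; ring. Qed.
Lemma dotvZl a u w : dotv (a *: u) w = a * dotv u w.
Proof. coord; ring. Qed.
Lemma dotvZr a u w : dotv w (a *: u) = a * dotv w u.
Proof. coord; ring. Qed.
Lemma dotvNl u w : dotv (- u) w = - dotv u w.
Proof. coord; ring. Qed.
Lemma dotvNr u w : dotv w (- u) = - dotv w u.
Proof. coord; ring. Qed.
Lemma dotv_ge0 u : 0 <= dotv u u.
Proof. coord. nra. Qed.

Lemma cauchy_schwarz u v : dotv u v ^+ 2 <= dotv u u * dotv v v.
Proof.
coord.
set a0 := cu u 0; set a1 := cu u 1; set a2 := cu u 2;
set b0 := cu v 0; set b1 := cu v 1; set b2 := cu v 2.
rewrite -subr_ge0.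
have -> : (a0 * a0 + a1 * a1 + a2 * a2) * (b0 * b0 + b1 * b1 + b2 * b2) -
  (a0 * b0 + a1 * b1 + a2 * b2) ^+ 2 =
  (a0 * b1 - a1 * b0) ^+ 2 + (a0 * b2 - a2 * b0) ^+ 2 + (a1 * b2 - a2 * b1) ^+ 2 by ring.
by rewrite !addr_ge0 // sqr_ge0.
Qed.


Lemma acos_cmp (r : R) : -1 <= r <= 1 ->
  (acos r < (pi : R) / 2 <-> 0 < r) /\ ((pi : R) / 2 < acos r <-> r < 0).
Proof.
move=> hr.
have hpi := pi_gt0 R.
have h1 : (pi : R) / 2 \in `[0, pi] by rewrite in_itv /=; apply/andP; split; lra.
have h2 : acos r \in `[0, (pi : R)] by rewrite in_itv /= acos_ge0 // acos_lepi.
have hc : cos (acos r) = r by apply: acosK; rewrite in_itv.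
split.
- by rewrite -(ltr_cos h2 h1) hc cos_pihalf.
- by rewrite -(ltr_cos h1 h2) hc cos_pihalf.
Qed.

Lemma angle_sign u v :
  (acute (vec_angle u v) <-> 0 < dotv u v) /\ (obtuse (vec_angle u v) <-> dotv u v < 0).
Proof.
rewrite /acute /obtuse /vec_angle /enorm.
set d := dotv u v.
have hu := dotv_ge0 u; have hv := dotv_ge0 v.
set N := Num.sqrt (dotv u u) * Num.sqrt (dotv v v).
have N0 : 0 <= N by rewrite mulr_ge0 // sqrtr_ge0.
have NN : N ^+ 2 = dotv u u * dotv v v by rewrite exprMn !sqr_sqrtr.
have cs := cauchy_schwarz u v; rewrite -/d -NN in cs.
have [hd1 hd2] : - N <= d /\ d <= N by rewrite !expr2 in cs; split; nra.
have [Nz|Npos] := eqVneq N 0.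
  have dz : d = 0 by lra.
  rewrite Nz dz mul0r acos0; split; split; lra.
have Np : 0 < N by rewrite lt_neqAle eq_sym Npos.
have hr : -1 <= d / N <= 1.
  by apply/andP; split; [rewrite ler_pdivlMr // | rewrite ler_pdivrMr //]; lra.
have [ha ho] := acos_cmp hr.
split.
- by rewrite ha ltr_pdivlMr // mul0r.
- by rewrite ho ltr_pdivrMr // mul0r.
Qed.


Lemma comp_le_norm (z : vec) i : `|z 0 i| <= `|z|.
Proof.
rewrite -[`|z|]/(mx_norm z) mx_normrE.
exact: (le_bigmax _ (fun ij : 'I_1 * 'I_3 => `|z ij.1 ij.2|) (0, i)).
Qed.

Lemma dot_bound z k :
  `|dotv z k| <= (`|k 0 0| + `|k 0 1| + `|k 0 2%:R|) * `|z|.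
Proof.
rewrite dotvE.
have h0 := comp_le_norm z 0; have h1 := comp_le_norm z 1; have h2 := comp_le_norm z 2%:R.
have g0 := normr_ge0 (k 0 0); have g1 := normr_ge0 (k 0 1); have g2 := normr_ge0 (k 0 2%:R).
apply: (le_trans (ler_normD _ _)).
rewrite !normrM.
have := ler_normD (z 0 0 * k 0 0) (z 0 1 * k 0 1); rewrite !normrM => hh.
have e0 : `|z 0 0| * `|k 0 0| <= `|z| * `|k 0 0| by rewrite ler_wpM2r.
have e1 : `|z 0 1| * `|k 0 1| <= `|z| * `|k 0 1| by rewrite ler_wpM2r.
have e2 : `|z 0 2%:R| * `|k 0 2%:R| <= `|z| * `|k 0 2%:R| by rewrite ler_wpM2r.
lra.
Qed.

Lemma near_pos (x : R) k : 0 < x ->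
  exists2 e : R, 0 < e & forall z, `|z| < e -> 0 < x + dotv z k.
Proof.
move=> x0.
set K := `|k 0 0| + `|k 0 1| + `|k 0 2%:R|.
have K0 : 0 <= K by rewrite !addr_ge0.
exists (x / (K + 1)); first by rewrite divr_gt0 // ltr_wpDl.
move=> z hz.
have hb := dot_bound z k; rewrite -/K in hb.
have hKe : K * `|z| <= K * (x / (K + 1)) by rewrite ler_wpM2l // ltW.
have hx : K * (x / (K + 1)) < x.
  rewrite mulrA ltr_pdivrMr; last by rewrite ltr_wpDl.
  nra.
have hh2 : - dotv z k <= `|dotv z k| by rewrite -normrN ler_norm.
lra.
Qed.

Lemma small_scale (e : R) (m : vec) : 0 < e ->
  exists2 d : R, 0 < d & `|d *: m| < e.
Proof.
move=> e0; have m0 := normr_ge0 m.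
exists (e / (`|m| + 1)); first by rewrite divr_gt0 // ltr_wpDl.
rewrite normrZ ger0_norm; last by rewrite divr_ge0 ?ltW // ltr_wpDl.
rewrite mulrC mulrA ltr_pdivrMr; last by rewrite ltr_wpDl.
nra.
Qed.


Definition dsc e x y := dotv e e * dotv x y - dotv x e * dotv y e.

Lemma perp_dot e x y : dotv e e != 0 ->
  dotv e e * dotv (perp e x) (perp e y) = dsc e x y.
Proof.
move=> he; rewrite /perp /dsc !(dotvBl, dotvBr, dotvZl, dotvZr) (dotvC x y) (dotvC e y).
field.
exact: he.
Qed.

Lemma perp_sign e x y : 0 < dotv e e ->
  (acute (vec_angle (perp e x) (perp e y)) <-> 0 < dsc e x y) /\
  (obtuse (vec_angle (perp e x) (perp e y)) <-> dsc e x y < 0).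
Proof.
move=> he; have [ha ho] := angle_sign (perp e x) (perp e y).
rewrite -perp_dot ?gt_eqF //; split.
- by rewrite ha pmulr_rgt0.
- by rewrite ho pmulr_rlt0.
Qed.


Definition NNf A B C := dotv (B - A) (B - A) * dotv (C - A) (C - A) - dotv (B - A) (C - A) ^+ 2.
Definition gB A B C z := dotv (C - A) (C - A) * dotv (B - A) z - dotv (B - A) (C - A) * dotv (C - A) z.
Definition gC A B C z := dotv (B - A) (B - A) * dotv (C - A) z - dotv (B - A) (C - A) * dotv (B - A) z.

Lemma dsc_AB A B C X : dsc (B - A) (C - A) (X - A) = gC A B C (X - A).
Proof. rewrite /dsc /gC; coord; ring. Qed.
Lemma dsc_AC A B C X : dsc (C - A) (B - A) (X - A) = gB A B C (X - A).
Proof. rewrite /dsc /gB; coord; ring. Qed.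
Lemma dsc_BC A B C X : dsc (C - B) (A - B) (X - B) =
  NNf A B C - gB A B C (X - A) - gC A B C (X - A).
Proof. rewrite /dsc /gB /gC /NNf; coord; ring. Qed.
Lemma dsc_BA A B C X : dsc (A - B) (C - B) (X - B) = dsc (B - A) (C - A) (X - A).
Proof. rewrite /dsc; coord; ring. Qed.
Lemma dsc_scale t s q e x y : dsc (t *: e) (s *: x) (q *: y) = t ^+ 2 * s * q * dsc e x y.
Proof. rewrite /dsc; coord; ring. Qed.
Lemma NN_cross A B C : NNf A B C = dotv (crossv (B - A) (C - A)) (crossv (B - A) (C - A)).
Proof. rewrite /NNf; coord; ring. Qed.
Lemma triple u v w : dotv u (crossv v w) = dotv w (crossv u v).
Proof. coord; ring. Qed.
Lemma NNf_BC A B C : NNf A B C = dotv (C - B) (C - B) * dotv (A - B) (A - B) - dotv (C - B) (A - B) ^+ 2.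
Proof. rewrite /NNf; coord; ring. Qed.

Lemma gB_lin A B C D b c d : gB A B C (b *: (B - A) + c *: (C - A) + d *: (D - A)) =
  b * NNf A B C + d * gB A B C (D - A).
Proof. rewrite /gB /NNf; coord; ring. Qed.
Lemma gC_lin A B C D b c d : gC A B C (b *: (B - A) + c *: (C - A) + d *: (D - A)) =
  c * NNf A B C + d * gC A B C (D - A).
Proof. rewrite /gC /NNf; coord; ring. Qed.
Lemma gB_sub A B C x y : gB A B C (x - y) = gB A B C x - gB A B C y.
Proof. rewrite /gB; coord; ring. Qed.
Lemma gC_sub A B C x y : gC A B C (x - y) = gC A B C x - gC A B C y.
Proof. rewrite /gC; coord; ring. Qed.

Lemma gram_pos (a b : vec) : 0 < dotv a a * dotv b b - dotv a b ^+ 2 -> 0 < dotv a a.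
Proof.
move=> h; have ha := dotv_ge0 a; have hb := dotv_ge0 b.
have := sqr_ge0 (dotv a b); rewrite expr2 in h * => h2; nra.
Qed.

Lemma NN_pos A B C D : noncoplanar A B C D -> 0 < NNf A B C.
Proof.
rewrite /noncoplanar detE triple NN_cross => hD.
set n := crossv (B - A) (C - A) in hD *.
have cs := cauchy_schwarz (D - A) n.
have h0 := dotv_ge0 n; have h1 := dotv_ge0 (D - A).
rewrite lt_neqAle h0 andbT; apply/negP => /eqP hn.
rewrite -hn mulr0 in cs.
have : dotv (D - A) n ^+ 2 == 0 by rewrite eq_le cs sqr_ge0.
by rewrite sqrf_eq0 (negbTE hD).
Qed.

End S.

Set Implicit Arguments. Unset Strict Implicit.
Section S2.
Variable R : realType.
Notation vec := 'rV[R]_3.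
Implicit Types u v w x y z A B C D X O e m : vec.
Ltac cnorm := repeat match goal with |- context [@cu ?R ?u ?k] =>
  let k' := eval compute in k in progress change (@cu R u k) with (@cu R u k') end.
Ltac coord := rewrite ?dotvE ?mxE /= ?cE; cnorm.
Ltac vcoord := apply: vecP; coord.

Lemma tetra_rep A B C D X : tetra A B C D X <-> exists b c d,
  [/\ 0 <= b, 0 <= c, 0 <= d & b + c + d <= 1] /\
  X - A = b *: (B - A) + c *: (C - A) + d *: (D - A).
Proof.
split.
- case=> a [b [c [d [[ha hb hc hd] [hs ->]]]]].
  exists b, c, d; split; first by split => //; lra.
  have -> : a = 1 - b - c - d by lra.
  vcoord; ring.
- move=> [b [c [d [[hb hc hd hs] hX]]]].
  exists (1 - b - c - d), b, c, d; split; first by split => //; lra.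
  split; first by ring.
  have -> : X = (X - A) + A by rewrite subrK.
  rewrite hX; vcoord; ring.
Qed.

Lemma coef_uniq u v w b c d b' c' d' : dotv u (crossv v w) != 0 ->
  b *: u + c *: v + d *: w = b' *: u + c' *: v + d' *: w ->
  [/\ b = b', c = c' & d = d'].
Proof.
move=> hD h.
have hu : forall b c d, dotv (b *: u + c *: v + d *: w) (crossv v w) = b * dotv u (crossv v w).
  by move=> *; coord; ring.
have hv : forall b c d, dotv (b *: u + c *: v + d *: w) (crossv w u) = c * dotv u (crossv v w).
  by move=> *; coord; ring.
have hw : forall b c d, dotv (b *: u + c *: v + d *: w) (crossv u v) = d * dotv u (crossv v w).
  by move=> *; coord; ring.
split.
- by apply: (mulIf hD); rewrite -(hu b c d) h hu.
- by apply: (mulIf hD); rewrite -(hv b c d) h hv.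
- by apply: (mulIf hD); rewrite -(hw b c d) h hw.
Qed.

Lemma decomp u v w z : dotv u (crossv v w) != 0 ->
  let k := (dotv u (crossv v w))^-1 in
  z = dotv z (k *: crossv v w) *: u + dotv z (k *: crossv w u) *: v +
      dotv z (k *: crossv u v) *: w.
Proof.
move=> hD k.
have h : dotv u (crossv v w) *: z = dotv z (crossv v w) *: u +
   dotv z (crossv w u) *: v + dotv z (crossv u v) *: w.
  by vcoord; ring.
by rewrite !dotvZr -!scalerA -!scalerDr -h scalerA mulVf // scale1r.
Qed.


Lemma interior_coords A B C D O : noncoplanar A B C D ->
  interior (tetra A B C D) O ->
  exists b c d, [/\ 0 < b, 0 < c, 0 < d & b + c + d < 1] /\
  O - A = b *: (B - A) + c *: (C - A) + d *: (D - A).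
Proof.
rewrite /noncoplanar detE => hD /nbhs_normP [e /= e0 hball].
set u := B - A; set v := C - A; set w := D - A.
rewrite -/u -/v -/w in hD.
have hO : tetra A B C D O by apply: hball; rewrite /ball_ /= subrr normr0.
have [b [c [d [[hb hc hd hs] hOA]]]] := (tetra_rep A B C D O).1 hO.
have pert : forall m, exists2 δ : R, 0 < δ & exists b' c' d',
    [/\ 0 <= b', 0 <= c', 0 <= d' & b' + c' + d' <= 1] /\
    (b *: u + c *: v + d *: w) + δ *: m = b' *: u + c' *: v + d' *: w.
  move=> m; have [δ δ0 hδ] := small_scale m e0.
  exists δ => //.
  have hY : tetra A B C D (O + δ *: m).
    by apply: hball; rewrite /ball_ /= opprD addrA subrr add0r normrN.
  have [b' [c' [d' [hs' hY']]]] := (tetra_rep A B C D _).1 hY.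
  exists b', c', d'; split => //.
  by rewrite -hOA -hY' addrAC.
have [δ1 p1 [b1 [c1 [d1 [[_ _ hd1 _] e1]]]]] := pert (- w).
have [δ2 p2 [b2 [c2 [d2 [[_ hc2 _ _] e2]]]]] := pert (- v).
have [δ3 p3 [b3 [c3 [d3 [[hb3 _ _ _] e3]]]]] := pert (- u).
have [δ4 p4 [b4 [c4 [d4 [[hb4 hc4 hd4 hs4] e4]]]]] := pert u.
have E1 : b *: u + c *: v + d *: w + δ1 *: - w = b *: u + c *: v + (d - δ1) *: w.
  by vcoord; ring.
have E2 : b *: u + c *: v + d *: w + δ2 *: - v = b *: u + (c - δ2) *: v + d *: w.
  by vcoord; ring.
have E3 : b *: u + c *: v + d *: w + δ3 *: - u = (b - δ3) *: u + c *: v + d *: w.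
  by vcoord; ring.
have E4 : b *: u + c *: v + d *: w + δ4 *: u = (b + δ4) *: u + c *: v + d *: w.
  by vcoord; ring.
rewrite E1 in e1; rewrite E2 in e2; rewrite E3 in e3; rewrite E4 in e4.
have [_ _ f1] := coef_uniq hD e1.
have [_ f2 _] := coef_uniq hD e2.
have [f3 _ _] := coef_uniq hD e3.
have [f4 f4' f4''] := coef_uniq hD e4.
exists b, c, d; split => //; split; lra.
Qed.

Lemma coords_interior A B C D O b c d : noncoplanar A B C D ->
  [/\ 0 < b, 0 < c, 0 < d & b + c + d < 1] ->
  O - A = b *: (B - A) + c *: (C - A) + d *: (D - A) ->
  interior (tetra A B C D) O.
Proof.
rewrite /noncoplanar detE => hD [hb hc hd hs] hOA.
set u := B - A in hOA *; set v := C - A in hOA *; set w := D - A in hOA *.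
set k := (dotv u (crossv v w))^-1.
set kU := k *: crossv v w; set kV := k *: crossv w u; set kW := k *: crossv u v.
have cU : dotv (O - A) kU = b.
  rewrite hOA /kU dotvZr (_ : dotv _ _ = b * dotv u (crossv v w)); last by coord; ring.
  by rewrite /k mulrCA mulVf // mulr1.
have cV : dotv (O - A) kV = c.
  rewrite hOA /kV dotvZr (_ : dotv _ _ = c * dotv u (crossv v w)); last by coord; ring.
  by rewrite /k mulrCA mulVf // mulr1.
have cW : dotv (O - A) kW = d.
  rewrite hOA /kW dotvZr (_ : dotv _ _ = d * dotv u (crossv v w)); last by coord; ring.
  by rewrite /k mulrCA mulVf // mulr1.
have [e1 e10 h1] := near_pos kU hb.
have [e2 e20 h2] := near_pos kV hc.
have [e3 e30 h3] := near_pos kW hd.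
have h4p : 0 < 1 - b - c - d by lra.
have [e4 e40 h4] := near_pos (- (kU + kV + kW)) h4p.
apply/(@nbhs_normP R _ O (tetra A B C D)); exists (Num.min (Num.min e1 e2) (Num.min e3 e4)).
  by rewrite /= !lt_min e10 e20 e30 e40.
move=> Y /= hY.
have hz : `|Y - O| < Num.min (Num.min e1 e2) (Num.min e3 e4) by rewrite distrC.
rewrite !lt_min in hz; case/andP: hz => /andP[z1 z2] /andP[z3 z4].
have q1 := h1 _ z1; have q2 := h2 _ z2; have q3 := h3 _ z3; have q4 := h4 _ z4.
have hYA : Y - A = (O - A) + (Y - O) by vcoord; ring.
apply/tetra_rep; exists (dotv (Y - A) kU), (dotv (Y - A) kV), (dotv (Y - A) kW).
split; last exact: decomp.
rewrite hYA !(dotvDl (O - A)) cU cV cW.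
rewrite !dotvNr !dotvDr in q4.
split; lra.
Qed.


Lemma tri_rep A B C X : triangle A B C X <-> exists b c,
  [/\ 0 <= b, 0 <= c & b + c <= 1] /\ X - A = b *: (B - A) + c *: (C - A).
Proof.
split.
- case=> a [b [c [[ha hb hc] [hs ->]]]].
  exists b, c; split; first by split => //; lra.
  have -> : a = 1 - b - c by lra.
  vcoord; ring.
- move=> [b [c [[hb hc hs] hX]]].
  exists (1 - b - c), b, c; split; first by split => //; lra.
  split; first by ring.
  have -> : X = (X - A) + A by rewrite subrK.
  rewrite hX; vcoord; ring.
Qed.

Lemma aff_rep A B C X : aff3 A B C X -> exists b c, X - A = b *: (B - A) + c *: (C - A).
Proof.
case=> a [b [c [hs ->]]]; exists b, c.
have -> : a = 1 - b - c by rewrite -hs; ring.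
vcoord; ring.
Qed.

Lemma aff_of A B C X b c : X - A = b *: (B - A) + c *: (C - A) -> aff3 A B C X.
Proof.
move=> hX; exists (1 - b - c), b, c; split; first by ring.
have -> : X = (X - A) + A by rewrite subrK.
rewrite hX; vcoord; ring.
Qed.

Lemma tri_tetra A B C D X : triangle A B C X -> tetra A B C D X.
Proof.
case=> a [b [c [[ha hb hc] [hs ->]]]].
exists a, b, c, 0; split; first by split.
split; first by rewrite addr0.
by rewrite scale0r addr0.
Qed.

Lemma gB_dot A B C z : gB A B C z =
  dotv z (dotv (C - A) (C - A) *: (B - A) - dotv (B - A) (C - A) *: (C - A)).
Proof. rewrite /gB; coord; ring. Qed.
Lemma gC_dot A B C z : gC A B C z =
  dotv z (dotv (B - A) (B - A) *: (C - A) - dotv (B - A) (C - A) *: (B - A)).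
Proof. rewrite /gC; coord; ring. Qed.
Lemma gB_lin2 A B C b c : gB A B C (b *: (B - A) + c *: (C - A)) = b * NNf A B C.
Proof. rewrite /gB /NNf; coord; ring. Qed.
Lemma gC_lin2 A B C b c : gC A B C (b *: (B - A) + c *: (C - A)) = c * NNf A B C.
Proof. rewrite /gC /NNf; coord; ring. Qed.
Lemma proj_u A B C z : gB A B C z * dotv (B - A) (B - A) + gC A B C z * dotv (B - A) (C - A)
  = NNf A B C * dotv (B - A) z.
Proof. rewrite /gB /gC /NNf; coord; ring. Qed.
Lemma proj_v A B C z : gB A B C z * dotv (B - A) (C - A) + gC A B C z * dotv (C - A) (C - A)
  = NNf A B C * dotv (C - A) z.
Proof. rewrite /gB /gC /NNf; coord; ring. Qed.

End S2.

Set Implicit Arguments. Unset Strict Implicit.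
Section S3.
Variable R : realType.
Notation vec := 'rV[R]_3.
Implicit Types u v w x y z A B C D X O e m Q : vec.
Ltac cnorm := repeat match goal with |- context [@cu ?R ?u ?k] =>
  let k' := eval compute in k in progress change (@cu R u k) with (@cu R u k') end.
Ltac coord := rewrite ?dotvE ?mxE /= ?cE; cnorm.
Ltac vcoord := apply: vecP; coord.

Lemma eq_fwd A B C D O : noncoplanar A B C D ->
  equilibrium_on (tetra A B C D) (triangle A B C) (aff3 A B C) O ->
  [/\ 0 < gB A B C (O - A), 0 < gC A B C (O - A) &
      0 < NNf A B C - gB A B C (O - A) - gC A B C (O - A)].
Proof.
move=> hnc [Q [[hQt [e [e0 hball]]] [hQO [hQtet hsup]]]].
have NN0 := NN_pos hnc.
have NNn : NNf A B C != 0 by rewrite gt_eqF.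
have [b [c [[hb hc hs] hQA]]] := (tri_rep _ _ _ _).1 hQt.
have pert : forall b0 c0, exists2 δ : R, 0 < δ &
   [/\ 0 <= b + δ * b0, 0 <= c + δ * c0, (b + δ * b0) + (c + δ * c0) <= 1 &
       tetra A B C D (Q + δ *: (b0 *: (B - A) + c0 *: (C - A)))].
  move=> b0 c0; set m := b0 *: (B - A) + c0 *: (C - A).
  have [δ δ0 hδ] := small_scale m e0; exists δ => //.
  set Y := Q + δ *: m.
  have hYA : Y - A = (b + δ * b0) *: (B - A) + (c + δ * c0) *: (C - A).
    have -> : Y - A = (Q - A) + δ *: m by rewrite /Y; vcoord; ring.
    rewrite hQA /m; vcoord; ring.
  have hY : triangle A B C Y.
    apply: hball; first exact: aff_of hYA.
    by rewrite /Y addrAC subrr add0r.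
  have [b' [c' [[hb' hc' hs'] hY']]] := (tri_rep _ _ _ _).1 hY.
  have eb : b' = b + δ * b0.
    apply: (mulIf NNn); rewrite -(gB_lin2 A B C b' c') -hY' hYA gB_lin2 //.
  have ec : c' = c + δ * c0.
    apply: (mulIf NNn); rewrite -(gC_lin2 A B C b' c') -hY' hYA gC_lin2 //.
  by split; [rewrite -eb | rewrite -ec | rewrite -eb -ec | exact: tri_tetra hY].
have key : forall δ m, dotv (Q + δ *: m - Q) (Q - O) = δ * dotv m (Q - O).
  by move=> δ m; rewrite addrAC subrr add0r dotvZl.
have [δ1 p1 [q1 _ _ t1]] := pert (-1) 0.
have [δ2 p2 [_ q2 _ t2]] := pert 0 (-1).
have [δ3 p3 [_ _ q3 t3]] := pert 1 0.
have [δ4 p4 [_ _ _ t4]] := pert 0 1.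
have hu0 : dotv (B - A) (Q - O) = 0.
  case: hsup => H; have h1 := H _ t1; have h3 := H _ t3;
  rewrite !key !dotvDl !dotvZl in h1 h3; nra.
have hv0 : dotv (C - A) (Q - O) = 0.
  case: hsup => H; have h2 := H _ t2; have h4 := H _ t4;
  rewrite !key !dotvDl !dotvZl in h2 h4; nra.
have gB0 : gB A B C (Q - O) = 0 by rewrite /gB hu0 hv0 !mulr0 subrr.
have gC0 : gC A B C (Q - O) = 0 by rewrite /gC hu0 hv0 !mulr0 subrr.
have hOA : O - A = (Q - A) - (Q - O) by vcoord; ring.
rewrite hOA gB_sub gC_sub gB0 gC0 hQA gB_lin2 gC_lin2 !subr0.
split; nra.
Qed.


Lemma dot_comb u v w x b c d : dotv (b *: u + c *: v + d *: w) x =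
  b * dotv u x + c * dotv v x + d * dotv w x.
Proof. coord; ring. Qed.
Lemma dot_comb2 u v x b c : dotv (b *: u + c *: v) x = b * dotv u x + c * dotv v x.
Proof. coord; ring. Qed.

Lemma eq_bwd A B C D O : noncoplanar A B C D -> interior (tetra A B C D) O ->
  [/\ 0 < gB A B C (O - A), 0 < gC A B C (O - A) &
      0 < NNf A B C - gB A B C (O - A) - gC A B C (O - A)] ->
  equilibrium_on (tetra A B C D) (triangle A B C) (aff3 A B C) O.
Proof.
move=> hnc hint [g1 g2 g3].
have NN0 := NN_pos hnc.
have NNn : NNf A B C != 0 by rewrite gt_eqF.
set p := O - A in g1 g2 g3 *.
set N := NNf A B C in NN0 NNn g3 *.
set b := gB A B C p / N; set c := gC A B C p / N.
set Q := A + (b *: (B - A) + c *: (C - A)).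
have hQA : Q - A = b *: (B - A) + c *: (C - A) by rewrite /Q; vcoord; ring.
have bN : b * N = gB A B C p by rewrite /b mulfVK.
have cN : c * N = gC A B C p by rewrite /c mulfVK.
have hb : 0 <= b by rewrite /b divr_ge0 // ltW.
have hc : 0 <= c by rewrite /c divr_ge0 // ltW.
have hbc : b + c < 1.
  have : (b + c) * N < 1 * N by rewrite mulrDl bN cN mul1r; lra.
  by rewrite ltr_pM2r.
have hQt : triangle A B C Q.
  by apply/tri_rep; exists b, c; split => //; split => //; lra.
exists Q; split.
- split => //.
  set kb := dotv (C - A) (C - A) *: (B - A) - dotv (B - A) (C - A) *: (C - A).
  set kc := dotv (B - A) (B - A) *: (C - A) - dotv (B - A) (C - A) *: (B - A).
  have [e1 e10 h1] := near_pos kb g1.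
  have [e2 e20 h2] := near_pos kc g2.
  have [e3 e30 h3] := near_pos (- (kb + kc)) g3.
  exists (Num.min (Num.min e1 e2) e3); split.
    by rewrite !lt_min e10 e20 e30.
  move=> Y /aff_rep [b' [c' hY]] hz.
  rewrite !lt_min in hz; case/andP: hz => /andP[z1 z2] z3.
  have q1 := h1 _ z1; have q2 := h2 _ z2; have q3 := h3 _ z3.
  have hYA : Y - A = (Q - A) + (Y - Q) by vcoord; ring.
  have eB : b' * N = gB A B C p + dotv (Y - Q) kb.
    rewrite -(gB_lin2 A B C b' c') -hY hYA gB_dot dotvDl -gB_dot hQA gB_lin2 bN //.
  have eC : c' * N = gC A B C p + dotv (Y - Q) kc.
    rewrite -(gC_lin2 A B C b' c') -hY hYA gC_dot dotvDl -gC_dot hQA gC_lin2 cN //.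
  rewrite dotvNr dotvDr in q3.
  apply/tri_rep; exists b', c'; split => //.
  have hb' : 0 < b' by rewrite -(pmulr_lgt0 _ NN0); lra.
  have hc' : 0 < c' by rewrite -(pmulr_lgt0 _ NN0); lra.
  have hs' : 0 < 1 - b' - c'.
    by rewrite -(pmulr_lgt0 _ NN0) !mulrBl mul1r; lra.
  split; lra.
- split.
    apply/eqP => hQO.
    have [b0 [c0 [d0 [[_ _ hd0 _] hO]]]] := interior_coords hnc hint.
    have hO' : O - A = b *: (B - A) + c *: (C - A) + 0 *: (D - A).
      by rewrite -hQO hQA scale0r addr0.
    move: hnc; rewrite /noncoplanar detE => hD.
    have [_ _ e0] := coef_uniq hD (etrans (esym hO') hO).
    lra.
  split; first exact: tri_tetra.
  have hQO : Q - O = (Q - A) - p by rewrite /p; vcoord; ring.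
  have hu0 : dotv (B - A) (Q - O) = 0.
    rewrite hQO dotvBr hQA dotvDr !dotvZr.
    apply/eqP; rewrite subr_eq0; apply/eqP; apply: (mulIf NNn).
    rewrite mulrDl -!mulrA ![dotv _ _ * N]mulrC !mulrA bN cN proj_u mulrC //.
  have hv0 : dotv (C - A) (Q - O) = 0.
    rewrite hQO dotvBr hQA dotvDr !dotvZr (dotvC (C - A) (B - A)).
    apply/eqP; rewrite subr_eq0; apply/eqP; apply: (mulIf NNn).
    rewrite mulrDl -!mulrA ![dotv _ _ * N]mulrC !mulrA bN cN proj_v mulrC //.
  have hX : forall X, tetra A B C D X -> exists2 d', 0 <= d' &
      dotv (X - Q) (Q - O) = d' * dotv (D - A) (Q - O).
    move=> X /tetra_rep [b' [c' [d' [[_ _ hd' _] hX]]]].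
    exists d' => //.
    have -> : X - Q = (X - A) - (Q - A) by vcoord; ring.
    rewrite hX hQA dotvBl dot_comb dot_comb2 hu0 hv0; ring.
  case: (leP (dotv (D - A) (Q - O)) 0) => hw.
  + by left => X /hX [d' hd' ->]; nra.
  + by right => X /hX [d' hd' ->]; nra.
Qed.

End S3.

Set Implicit Arguments. Unset Strict Implicit.
Section S4.
Variable R : realType.
Notation vec := 'rV[R]_3.
Implicit Types u v w x y z A B C D X O e m Q P W Y Z : vec.
Ltac cnorm := repeat match goal with |- context [@cu ?R ?u ?k] =>
  let k' := eval compute in k in progress change (@cu R u k) with (@cu R u k') end.
Ltac coord := rewrite ?dotvE ?mxE /= ?cE; cnorm.
Ltac vcoord := apply: vecP; coord.

Lemma seg_rep X Y P r : 0 < r -> on_seg X Y P -> enorm (P - X) = r ->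
  exists2 t : R, 0 < t & P - X = t *: (Y - X).
Proof.
move=> r0 [t [/andP[ht0 ht1] hP]] hn.
have hPX : P - X = t *: (Y - X) by rewrite hP; vcoord; ring.
exists t => //.
rewrite lt_neqAle ht0 andbT; apply/negP => /eqP ht.
move: hn; rewrite hPX -ht scale0r /enorm.
have -> : dotv (0 : vec) 0 = 0 by coord; ring.
rewrite sqrtr0 => h; lra.
Qed.

Lemma sph_obtuse X Y Z W P Q Wp r : 0 < r -> 0 < dotv (Y - X) (Y - X) ->
  dsc (Y - X) (Z - X) (W - X) < 0 ->
  on_seg X Y P -> on_seg X Z Q -> on_seg X W Wp ->
  enorm (P - X) = r -> enorm (Q - X) = r -> enorm (Wp - X) = r ->
  obtuse (spherical_angle X P Q Wp).
Proof.
move=> r0 hY hd sP sQ sW eP eQ eW.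
have [t t0 hP] := seg_rep r0 sP eP.
have [s s0 hQ] := seg_rep r0 sQ eQ.
have [q q0 hW] := seg_rep r0 sW eW.
rewrite /spherical_angle hP hQ hW.
have he : 0 < dotv (t *: (Y - X)) (t *: (Y - X)).
  by rewrite dotvZl dotvZr mulrA mulr_gt0 // mulr_gt0.
have [_ ->] := perp_sign (s *: (Z - X)) (q *: (W - X)) he.
rewrite dsc_scale.
have : 0 < t ^+ 2 * s * q by rewrite !mulr_gt0 // exprn_gt0.
nra.
Qed.


Lemma dih_signs A B C X : 0 < NNf A B C ->
  [/\ (acute (dihedral A B C X) <-> 0 < gC A B C (X - A)),
      (acute (dihedral A C B X) <-> 0 < gB A B C (X - A)),
      (acute (dihedral B C A X) <-> 0 < NNf A B C - gB A B C (X - A) - gC A B C (X - A)) &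
      [/\ (obtuse (dihedral A B C X) <-> gC A B C (X - A) < 0),
      (obtuse (dihedral A C B X) <-> gB A B C (X - A) < 0) &
      (obtuse (dihedral B C A X) <-> NNf A B C - gB A B C (X - A) - gC A B C (X - A) < 0)]].
Proof.
move=> NN0.
have uu0 : 0 < dotv (B - A) (B - A) by apply: (@gram_pos _ _ (C - A)); exact: NN0.
have vv0 : 0 < dotv (C - A) (C - A).
  apply: (@gram_pos _ _ (B - A)); rewrite dotvC mulrC; exact: NN0.
have ww0 : 0 < dotv (C - B) (C - B).
  apply: (@gram_pos _ _ (A - B)); rewrite -NNf_BC; exact: NN0.
have [a1 o1] := perp_sign (C - A) (X - A) uu0.
have [a2 o2] := perp_sign (B - A) (X - A) vv0.
have [a3 o3] := perp_sign (A - B) (X - B) ww0.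
rewrite /dihedral; split; [| | | split].
- by rewrite a1 dsc_AB.
- by rewrite a2 dsc_AC.
- by rewrite a3 dsc_BC.
- by rewrite o1 dsc_AB.
- by rewrite o2 dsc_AC.
- by rewrite o3 dsc_BC.
Qed.

Lemma dotv_swap A B : dotv (A - B) (A - B) = dotv (B - A) (B - A).
Proof. coord; ring. Qed.
Lemma uu_pos A B C : 0 < NNf A B C -> 0 < dotv (B - A) (B - A).
Proof. by move=> h; apply: (@gram_pos _ _ (C - A)); exact: h. Qed.

End S4.

Unset Implicit Arguments.

Theorem lemma1p5 (R : realType) (A B C D O : 'rV[R]_3) :
  noncoplanar A B C D ->
  interior (tetra A B C D) O ->
  (* (1) *)
  (equilibrium_on (tetra A B C D) (triangle A B C) (aff3 A B C) O <->
     [/\ acute (dihedral A B C O), acute (dihedral A C B O)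
       & acute (dihedral B C A O)]) /\
  (* (2) *)
  ((forall O', interior (tetra A B C D) O' ->
       equilibrium_on (tetra A B C D) (triangle A B C) (aff3 A B C) O') <->
     [/\ ~ obtuse (dihedral A B C D), ~ obtuse (dihedral A C B D)
       & ~ obtuse (dihedral B C A D)]) /\
  (* (3) *)
  (obtuse (dihedral A B C O) ->
     forall r : R, 0 < r ->
     (forall P Q W, on_seg A B P -> on_seg A C Q -> on_seg A O W ->
        enorm (P - A) = r -> enorm (Q - A) = r -> enorm (W - A) = r ->
        obtuse (spherical_angle A P Q W)) /\
     (forall P Q W, on_seg B A P -> on_seg B C Q -> on_seg B O W ->
        enorm (P - B) = r -> enorm (Q - B) = r -> enorm (W - B) = r ->
        obtuse (spherical_angle B P Q W))).
Proof.
move=> hnc hint.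
have NN0 := NN_pos hnc.
have [aO1 aO2 aO3 [oO1 _ _]] := dih_signs O NN0.
have [_ _ _ [oD1 oD2 oD3]] := dih_signs D NN0.
have N2 : 0 < 2 * NNf A B C by rewrite mulr_gt0.
split; [|split].
- split.
  + move/(eq_fwd hnc) => [g1 g2 g3]; split; [apply/aO1 | apply/aO2 | apply/aO3] => //.
  + case=> /aO1 g2 /aO2 g1 /aO3 g3; exact: (eq_bwd hnc hint (And3 g1 g2 g3)).
- split.
  + move=> Hall.
    have mk : forall b c d, [/\ 0 < b, 0 < c, 0 < d & b + c + d < 1] ->
       [/\ 0 < b * NNf A B C + d * gB A B C (D - A),
           0 < c * NNf A B C + d * gC A B C (D - A) &
           0 < NNf A B C - (b * NNf A B C + d * gB A B C (D - A))
                         - (c * NNf A B C + d * gC A B C (D - A))].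
      move=> b c d hbcd.
      set O' := A + (b *: (B - A) + c *: (C - A) + d *: (D - A)).
      have hO'A : O' - A = b *: (B - A) + c *: (C - A) + d *: (D - A).
        by rewrite /O' addrC addKr.
      have := eq_fwd hnc (Hall O' (coords_interior hnc hbcd hO'A)).
      by rewrite hO'A gB_lin gC_lin.
    split.
    * move=> /oD1 hneg.
      set s := Num.min (1/8) (- gC A B C (D - A) / (2 * NNf A B C)).
      have s0 : 0 < s.
        rewrite lt_min; apply/andP; split; first lra.
        by rewrite divr_gt0 //; lra.
      have s1 : s <= 1/8 by rewrite ge_min lexx.
      have s2 : s * (2 * NNf A B C) <= - gC A B C (D - A).
        by rewrite -ler_pdivlMr // ge_min lexx orbT.
      have [_ h _] : _ := mk (1/8) s (1/2) ltac:(split; lra).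
      nra.
    * move=> /oD2 hneg.
      set s := Num.min (1/8) (- gB A B C (D - A) / (2 * NNf A B C)).
      have s0 : 0 < s.
        rewrite lt_min; apply/andP; split; first lra.
        by rewrite divr_gt0 //; lra.
      have s1 : s <= 1/8 by rewrite ge_min lexx.
      have s2 : s * (2 * NNf A B C) <= - gB A B C (D - A).
        by rewrite -ler_pdivlMr // ge_min lexx orbT.
      have [h _ _] : _ := mk s (1/8) (1/2) ltac:(split; lra).
      nra.
    * move=> /oD3 hneg.
      set gA := NNf A B C - gB A B C (D - A) - gC A B C (D - A) in hneg.
      set s := Num.min (1/4) (- gA / (2 * NNf A B C)).
      have s0 : 0 < s.
        rewrite lt_min; apply/andP; split; first lra.
        by rewrite divr_gt0 //; lra.
      have s1 : s <= 1/4 by rewrite ge_min lexx.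
      have s2 : s * (2 * NNf A B C) <= - gA.
        by rewrite -ler_pdivlMr // ge_min lexx orbT.
      have [_ _ h] : _ := mk (1/8) (1/8) (3/4 - s) ltac:(split; lra).
      have eA : NNf A B C - (1/8 * NNf A B C + (3/4 - s) * gB A B C (D - A))
                 - (1/8 * NNf A B C + (3/4 - s) * gC A B C (D - A))
                = s * NNf A B C + (3/4 - s) * gA by rewrite /gA; field.
      rewrite eA in h.
      nra.
  + move=> [n1 n2 n3] O' hO'.
    have hC : 0 <= gC A B C (D - A).
      by rewrite leNgt; apply/negP => h; apply: n1; apply/oD1.
    have hB : 0 <= gB A B C (D - A).
      by rewrite leNgt; apply/negP => h; apply: n2; apply/oD2.
    have hA : 0 <= NNf A B C - gB A B C (D - A) - gC A B C (D - A).
      by rewrite leNgt; apply/negP => h; apply: n3; apply/oD3.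
    have [b [c [d [[hb hc hd hs] hO'A]]]] := interior_coords hnc hO'.
    apply: (eq_bwd hnc hO').
    rewrite hO'A gB_lin gC_lin.
    split; nra.
- move=> /oO1 hob r r0; split.
  + move=> P Q W sP sQ sW eP eQ eW.
    apply: (sph_obtuse r0 _ _ sP sQ sW eP eQ eW).
      exact: uu_pos NN0.
    by rewrite dsc_AB.
  + move=> P Q W sP sQ sW eP eQ eW.
    apply: (sph_obtuse r0 _ _ sP sQ sW eP eQ eW).
      by rewrite dotv_swap; exact: uu_pos NN0.
    by rewrite dsc_BA dsc_AB.
Qed.
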